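(* Let $N\ge 0$. Given infinite vectors $U_1,\dots,U_{N+1}$ and $I$ with entries in $M$, there exist unique infinite vectors $U'_1,\dots,U'_{N+1}$ and $I'$ with entries in $M$ such that $$F_{N+1}(U'_{N+1})\cdots F_2(U'_2)F_1(U'_1)E(I)=E(I')F_{N+1}(U_{N+1})\cdots F_2(U_2)F_1(U_1).$$ Moreover, the resulting map $(U_i,I)\mapsto(U'_i,I')$ is expressed by subtraction-free rational expressions (terms built from $+,\cdot,{}^{-1},1$).
   Context: $M$ is the semifield of germs at $\epsilon=0$ of continuous positive functions $f(\epsilon)$, $\epsilon>0$, with $\lim_{\epsilon\to+0}\epsilon\log f(\epsilon)\in\mathbb{R}$, with usual addition, multiplication and multiplicative inverse. For an infinite vector $I=(I_1,I_2,\dots)$, $E(I)$ is the infinite upper bidiagonal matrix with $I_1,I_2,\dots$ on the diagonal and $1$ on the superdiagonal. For an infinite vector $V=(V_1,V_2,\dots)$, $F(V)$ is the infinite lower bidiagonal matrix with $1$ on the diagonal and $-V_1,-V_2,\dots$ on the subdiagonal, and $F_k(V)=\mathrm{diag}(\mathrm{Id}_{k-1},F(V))$. *)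

(* Defs.v *)
From HB Require Import structures.
From mathcomp Require Import all_boot all_order all_algebra.
From mathcomp Require Import all_classical all_reals all_analysis.
Set Implicit Arguments. Unset Strict Implicit. Unset Printing Implicit Defensive.
Import Order.TTheory GRing.Theory Num.Theory.
Import numFieldNormedType.Exports.
Local Open Scope ring_scope.
Local Open Scope classical_set_scope.

Section Defs.
Variable R : realType.

(** Elements of the semifield M are represented by functions f : R -> R
    (only the values for small epsilon > 0 matter); [inM f] says f is
    (a representative of) an element of M. *)
Definition inM (f : R -> R) : Prop :=
  exists2 d : R, 0 < d &
    [/\ (forall e, 0 < e < d -> 0 < f e),
        {within `]0, d[, continuous f} &
        exists l : R, (fun e => e * ln (f e)) @ 0^'+ --> l].

Definition germ_eq (f g : R -> R) : Prop := \forall e \near 0^'+, f e = g e.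

(** Infinite matrices with germ (function) entries, indexed by nat x nat
    (index 0 corresponds to the paper's index 1). *)
Definition imx := nat -> nat -> R -> R.

(** The sum runs over k <= i+1; this is the exact
    (finite) matrix product whenever the left factor A is zero beyond the
    superdiagonal (A i k = 0 for k > i+1), which holds for every left factor
    used below (products of lower bidiagonal F_k's, and E). *)
Definition imul (A B : imx) : imx :=
  fun i j e => \sum_(k < i.+2) A i k e * B k j e.

Definition imx1 : imx := fun i j _ => if i == j then 1 else 0.

Definition Emx (I : nat -> R -> R) : imx :=
  fun i j e => if j == i then I i e else if j == i.+1 then 1 else 0.

(** F_{a+1}(V) = diag(Id_a, F(V)), F(V) lower bidiagonal with 1 on the
    diagonal and -V_1, -V_2, ... on the subdiagonal. *)
Definition Fkmx (a : nat) (V : nat -> R -> R) : imx :=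
  fun i j e => if i == j then 1
               else if (i == j.+1) && (a <= j)%N then - V (j - a)%N e else 0.

(** F_{N+1}(U_{N+1}) * ... * F_2(U_2) * F_1(U_1)  (U a = U_{a+1}). *)
Definition Fprod (N : nat) (U : 'I_N.+1 -> nat -> R -> R) : imx :=
  \big[imul/imx1]_(i < N.+1) Fkmx (rev_ord i) (U (rev_ord i)).

Definition imx_germ_eq (A B : imx) : Prop := forall i j, germ_eq (A i j) (B i j).

End Defs.

Inductive sfexpr (V : Type) : Type :=
  | SVar of V
  | SOne
  | SAdd of sfexpr V & sfexpr V
  | SMul of sfexpr V & sfexpr V
  | SInv of sfexpr V.

Fixpoint sfeval (R : realType) (V : Type) (env : V -> R -> R) (t : sfexpr V)
  : R -> R :=
  match t with
  | SVar v => env v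
  | SOne => fun _ => 1
  | SAdd s u => fun e => sfeval env s e + sfeval env u e
  | SMul s u => fun e => sfeval env s e * sfeval env u e
  | SInv s => fun e => (sfeval env s e)^-1
  end.

(** Variables: (inl (a, k)) = k-th entry (0-based) of U_{a+1};
    (inr k) = k-th entry (0-based) of I. *)
Definition pvar (N : nat) : Type := (('I_N.+1 * nat) + nat)%type.

Definition penv (R : realType) (N : nat) (U : 'I_N.+1 -> nat -> R -> R)
  (I : nat -> R -> R) : pvar N -> R -> R :=
  fun v => match v with inl (a, k) => U a k | inr k => I k end.

Definition is_solution (R : realType) (N : nat)
  (U : 'I_N.+1 -> nat -> R -> R) (I : nat -> R -> R)
  (U' : 'I_N.+1 -> nat -> R -> R) (I' : nat -> R -> R) : Prop :=
  [/\ (forall a k, inM (U' a k)), (forall k, inM (I' k)) &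
      imx_germ_eq (imul (Fprod U') (Emx I)) (imul (Emx I') (Fprod U))].

(* Main.v *)
Require Import Defs.
From HB Require Import structures.
From mathcomp Require Import all_boot all_order all_algebra.
From mathcomp Require Import all_classical all_reals all_analysis.
From mathcomp Require Import zify ring.
From Stdlib Require Import Lia.
Local Open Scope ring_scope.
Set Implicit Arguments. Unset Strict Implicit. Unset Printing Implicit Defensive.
Import Order.TTheory GRing.Theory Num.Theory.
Import numFieldNormedType.Exports.
Local Open Scope classical_set_scope.

Section Ana.
Variable R : realType.

Lemma inM_pos (f : R -> R) : inM f -> \forall e \near 0^'+, 0 < f e.
Proof.
case=> d d0 [hp _ _].
near=> e; apply: hp; apply/andP; split.
- near: e; exact: nbhs_right_gt.
- near: e; exact: nbhs_right_lt.
Unshelve. all: by end_near.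
Qed.

Lemma within_pt (f : R -> R) d x : {within `]0, d[, continuous f} ->
  0 < x -> x < d -> {for x, continuous f}.
Proof.
rewrite continuous_open_subspace; last exact: itv_open.
move=> h x0 xd; apply: h; by rewrite inE /= in_itv /= x0 xd.
Qed.

Lemma mk_within (f : R -> R) d : (forall x, 0 < x -> x < d -> {for x, continuous f}) ->
  {within `]0, d[, continuous f}.
Proof.
move=> h; rewrite continuous_open_subspace; last exact: itv_open.
move=> x; rewrite inE /= in_itv /= => /andP[x0 xd]; exact: h.
Qed.

Lemma inM1 : inM (fun _ : R => 1).
Proof.
exists 1; first exact: ltr01.
split.
- by [].
- by apply: continuous_subspaceT; exact: cst_continuous.
- exists 0; apply: cvg_trans (cvg_cst (0:R)).
  apply: near_eq_cvg; apply: filterE => e /=; by rewrite ln1 mulr0. typeclasses eauto.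
Qed.

Lemma inMM (f g : R -> R) : inM f -> inM g -> inM (fun e => f e * g e).
Proof.
case=> d1 d10 [p1 c1 [l1 L1]]; case=> d2 d20 [p2 c2 [l2 L2]].
exists (Num.min d1 d2); first by rewrite lt_min d10 d20.
split.
- move=> e /andP[e0]; rewrite lt_min => /andP[ed1 ed2].
  by apply: mulr_gt0; [apply: p1|apply: p2]; rewrite e0.
- apply: mk_within => x x0; rewrite lt_min => /andP[xd1 xd2].
  apply: continuousM; [exact: within_pt c1 x0 xd1|exact: within_pt c2 x0 xd2].
- exists (l1 + l2); apply: cvg_trans (cvgD L1 L2).
  apply: near_eq_cvg; near=> e.
  have he1 : 0 < f e by apply: p1; apply/andP; split; near: e;
     [exact: nbhs_right_gt| exact: nbhs_right_lt].
  have he2 : 0 < g e by apply: p2; apply/andP; split; near: e;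
     [exact: nbhs_right_gt| exact: nbhs_right_lt].
  by rewrite /= lnM ?posrE // mulrDr.
Unshelve. all: by end_near.
Qed.

Lemma inMV (f : R -> R) : inM f -> inM (fun e => (f e)^-1).
Proof.
case=> d1 d10 [p1 c1 [l1 L1]].
exists d1 => //; split.
- by move=> e he; rewrite invr_gt0; apply: p1.
- apply: mk_within => x x0 xd1.
  apply: continuousV; last exact: within_pt c1 x0 xd1.
  by rewrite gt_eqF //; apply: p1; rewrite x0 xd1.
- exists (- l1); apply: cvg_trans (cvgN L1).
  apply: near_eq_cvg; near=> e.
  have he1 : 0 < f e by apply: p1; apply/andP; split; near: e;
     [exact: nbhs_right_gt| exact: nbhs_right_lt].
  by rewrite /= lnV ?posrE // mulrN.
Unshelve. all: by end_near.
Qed.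

Lemma max_cvg (a b : R -> R) l1 l2 : a @ 0^'+ --> l1 -> b @ 0^'+ --> l2 ->
  (fun e => Num.max (a e) (b e)) @ 0^'+ --> Num.max l1 l2.
Proof.
move=> A B.
have FF : Filter (0:R)^'+ by typeclasses eauto.
apply: (@continuous2_cvg R R R R _ FF a b (fun x y => Num.max x y) l1 l2) => //.
exact: (@max_continuous _ R (l1, l2)).
Qed.

Lemma inMD (f g : R -> R) : inM f -> inM g -> inM (fun e => f e + g e).
Proof.
case=> d1 d10 [p1 c1 [l1 L1]]; case=> d2 d20 [p2 c2 [l2 L2]].
exists (Num.min d1 d2); first by rewrite lt_min d10 d20.
split.
- move=> e /andP[e0]; rewrite lt_min => /andP[ed1 ed2].
  by apply: addr_gt0; [apply: p1|apply: p2]; rewrite e0.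
- apply: mk_within => x x0; rewrite lt_min => /andP[xd1 xd2].
  apply: continuousD; [exact: within_pt c1 x0 xd1|exact: within_pt c2 x0 xd2].
- exists (Num.max l1 l2).
  have LM : (fun e => Num.max (e * ln (f e)) (e * ln (g e))) @ 0^'+ --> Num.max l1 l2.
    exact: max_cvg L1 L2.
  have LH : (fun e => e * ln 2 + Num.max (e * ln (f e)) (e * ln (g e))) @ 0^'+
       --> Num.max l1 l2.
    have FF : Filter (0:R)^'+ by typeclasses eauto.
    have Lid : (fun e : R => e) @ 0^'+ --> (0:R).
      exact: cvg_at_right_filter.
    have L0 := @cvgMr_tmp R R _ FF (fun e => e) 0 (ln 2) Lid.
    rewrite mul0r in L0.
    rewrite -[X in _ --> X]add0r; exact: (@cvgD _ _ _ _ FF _ _ _ _ L0 LM).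
  apply: squeeze_cvgr LM LH.
  near=> e.
  have e0 : 0 < e by near: e; exact: nbhs_right_gt.
  have he1 : 0 < f e by apply: p1; apply/andP; split; near: e;
     [exact: nbhs_right_gt| exact: nbhs_right_lt].
  have he2 : 0 < g e by apply: p2; apply/andP; split; near: e;
     [exact: nbhs_right_gt| exact: nbhs_right_lt].
  have hfg : 0 < f e + g e by rewrite addr_gt0.
  apply/andP; split.
  + rewrite ge_max !ler_pM2l // !ler_ln ?posrE //.
    by rewrite lerDl ltW //= lerDr ltW.
  + have [fg|gf] := lerP (f e) (g e).
    * apply: (@le_trans _ _ (e * ln 2 + e * ln (g e))); last first.
        by rewrite lerD2l le_max lexx orbT.
      rewrite -mulrDr ler_pM2l // -lnM ?posrE // ler_ln ?posrE ?mulr_gt0 //.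
      by rewrite mulr2n mulrDl mul1r lerD2r.
    * apply: (@le_trans _ _ (e * ln 2 + e * ln (f e))); last first.
        by rewrite lerD2l le_max lexx.
      rewrite -mulrDr ler_pM2l // -lnM ?posrE // ler_ln ?posrE ?mulr_gt0 //.
      by rewrite mulr2n mulrDl mul1r lerD2l ltW.
Unshelve. all: by end_near.
Qed.

Lemma inM_sfeval (V : Type) (env : V -> R -> R) (t : sfexpr V) :
  (forall v, inM (env v)) -> inM (sfeval env t).
Proof.
move=> h; elim: t => [v| |s hs u hu|s hs u hu|s hs] /=.
- exact: h.
- exact: inM1.
- exact: inMD hs hu.
- exact: inMM hs hu.
- exact: inMV hs.
Qed.

End Ana.

Section Alg.
Variable R : realType.
Implicit Types (A B C : imx R) (I J V : nat -> R -> R).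

Lemma sum_pick (n c : nat) (x : R) :
  \sum_(k < n) (if (k : nat) == c then x else 0) = if (c < n)%N then x else 0.
Proof.
elim: n => [|n IH]; first by rewrite big_ord0.
rewrite big_ord_recr /= IH.
case: (eqVneq n c) => [->|ne]; first by rewrite ltnn ltnSn add0r.
have -> : (c < n.+1)%N = (c < n)%N by rewrite ltnS leq_eqVlt eq_sym (negbTE ne).
by rewrite addr0.
Qed.

Lemma sum_widen (f : nat -> R) n m : (n <= m)%N ->
  (forall k, (n <= k)%N -> (k < m)%N -> f k = 0) ->
  \sum_(k < m) f k = \sum_(k < n) f k.
Proof.
elim: m => [|m IH] nm h.
  by move: nm; rewrite leqn0 => /eqP->.
case: (eqVneq n m.+1) => [->//|ne].
have nm' : (n <= m)%N by rewrite -ltnS ltn_neqAle ne nm.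
rewrite big_ord_recr /= h // addr0; apply: IH => // k k1 k2.
by apply: h => //; apply: ltnW.
Qed.

Lemma imul_EL Y A i j e :
  imul (Emx Y) A i j e = Y i e * A i j e + A i.+1 j e.
Proof.
rewrite /imul.
transitivity (\sum_(k < i.+2) ((if (k:nat) == i then Y i e * A i j e else 0)
     + (if (k:nat) == i.+1 then A i.+1 j e else 0))).
  apply: eq_bigr => k _; rewrite /Emx.
  case: (eqVneq (k:nat) i) => [->|ki].
    by rewrite ?eqxx ?(gtn_eqF (ltnSn i)) ?(ltn_eqF (ltnSn i)) addr0.
  case: (eqVneq (k:nat) i.+1) => [->|ki1]; first by rewrite mul1r add0r.
  by rewrite mul0r addr0.
by rewrite big_split /= !sum_pick ltnS leqnSn ltnSn.
Qed.

Lemma imul_LE A Y i j e : (forall k, (i < k)%N -> A i k e = 0) ->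
  imul A (Emx Y) i j e = A i j e * Y j e + (if j is j'.+1 then A i j' e else 0).
Proof.
move=> hA; rewrite /imul.
transitivity (\sum_(k < i.+2) ((if (k:nat) == j then A i j e * Y j e else 0)
     + (if (k:nat) == j.-1 then (if j is j'.+1 then A i j' e else 0) else 0))).
  apply: eq_bigr => k _; rewrite /Emx.
  case: j => [|j] /=.
    case: (eqVneq (k:nat) 0) => [->|k0]; first by rewrite addr0.
    by rewrite mulr0 addr0.
  case: (eqVneq (k:nat) j.+1) => [->|kj].
    by rewrite ?eqxx ?(gtn_eqF (ltnSn j)) ?(ltn_eqF (ltnSn j)) addr0.
  rewrite add0r eqSS.
  case: (eqVneq (k:nat) j) => [->|kj2]; first by rewrite ?eqxx mulr1.
  by rewrite mulr0.
rewrite big_split /= !sum_pick.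
case: (ltnP j i.+2) => hj.
  case: j hj => [|j] hj //=.
  by rewrite (ltn_trans (ltnSn j) hj).
rewrite (hA j) ?mul0r ?add0r; last exact: ltnW hj.
case: j hj => [|j] hj //=.
by case: ifP => // _; rewrite hA.
Qed.

Lemma imul_FL a V Q i j e :
  imul (Fkmx a V) Q i j e =
  Q i j e - (if (0 < i)%N && (a <= i.-1)%N then V (i.-1 - a)%N e * Q i.-1 j e else 0).
Proof.
rewrite /imul.
transitivity (\sum_(k < i.+2) ((if (k:nat) == i then Q i j e else 0)
     + (if (k:nat) == i.-1 then
          (if (0 < i)%N && (a <= i.-1)%N then - (V (i.-1 - a)%N e * Q i.-1 j e) else 0)
        else 0))).
  apply: eq_bigr => -[k hk] _ /=; clear hk; rewrite /Fkmx.
  case: (eqVneq k i) => [->|ki].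
    rewrite ?eqxx mul1r.
    case: i => [|i] //=; first by rewrite addr0.
    by rewrite ?(gtn_eqF (ltnSn i)) ?(ltn_eqF (ltnSn i)) addr0.
  rewrite add0r.
  case: i ki => [|i] ki /=.
    by rewrite mul0r; case: ifP.
  rewrite eqSS; case: (eqVneq k i) => [->|kn] /=.
    by case: ifP => _; rewrite ?mulNr ?mul0r.
  by rewrite mul0r.
rewrite big_split /= !sum_pick ltnS leqnSn.
case: i => [|i] /=; first by rewrite addr0 subr0.
have -> : (i < i.+3)%N by apply: leq_trans (leqnSn _) (leqnSn _).
by case: ifP => _; rewrite ?subr0 ?addr0.
Qed.

End Alg.

Section Alg2.
Variable R : realType.
Implicit Types (A B C : imx R) (I J V : nat -> R -> R) (U W : nat -> nat -> R -> R).

Fixpoint Pn (n : nat) U : imx R :=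
  if n is n'.+1 then imul (Fkmx n' (U n')) (Pn n' U) else @imx1 R.

Lemma Pn_entry n U i j e : Pn n.+1 U i j e = Pn n U i j e -
  (if (0 < i)%N && (n <= i.-1)%N then U n (i.-1 - n)%N e * Pn n U i.-1 j e else 0).
Proof. exact: imul_FL. Qed.

Lemma Pn_low n U i j e : (i < j)%N -> Pn n U i j e = 0.
Proof.
elim: n i j => [|n IH] i j ij.
  by rewrite /= /imx1 (ltn_eqF ij).
rewrite Pn_entry IH //; case: ifP => [/andP[i0 _]|_]; last by rewrite subr0.
by rewrite IH ?mulr0 ?subr0 //; apply: leq_ltn_trans (leq_pred i) ij.
Qed.

Lemma Pn_diag n U i e : Pn n U i i e = 1.
Proof.
elim: n => [|n IH]; first by rewrite /= /imx1 eqxx.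
rewrite Pn_entry IH; case: ifP => [/andP[i0 _]|_]; last by rewrite subr0.
by rewrite Pn_low ?mulr0 ?subr0 // ltn_predL.
Qed.

Lemma Pn_band n U i j e : (j + n < i)%N -> Pn n U i j e = 0.
Proof.
elim: n i => [|n IH] i h.
  by rewrite /= /imx1 (gtn_eqF _) //; rewrite addn0 in h.
rewrite Pn_entry IH; last by lia.
case: ifP => _; last by rewrite subr0.
by rewrite IH ?mulr0 ?subr0 //; lia.
Qed.

Lemma Pn_sign n U i j e : (forall k m, (k < n)%N -> (m < i)%N -> 0 <= U k m e) ->
  (j <= i)%N -> 0 <= (-1) ^+ (i - j) * Pn n U i j e.
Proof.
elim: n i => [|n IH] i hU ji.
  rewrite /= /imx1; case: (eqVneq i j) => [->|_]; last by rewrite mulr0.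
  by rewrite subnn expr0 mulr1.
have hU' : forall i', (i' <= i)%N -> forall k m, (k < n)%N -> (m < i')%N -> 0 <= U k m e.
  move=> i' ii k m kn mi; apply: hU; [exact: ltnW|exact: leq_trans mi ii].
rewrite Pn_entry; case: ifP => [/andP[i0 ni]|_]; last by rewrite subr0; apply: IH (hU' i (leqnn i)) ji.
case: (eqVneq j i) => [->|jni].
  rewrite (@Pn_low n U i.-1 i e); last by rewrite ltn_predL.
  by rewrite mulr0 subr0 Pn_diag subnn expr0 mulr1.
have ji' : (j <= i.-1)%N by rewrite -ltnS prednK // ltn_neqAle jni ji.
have E : (-1) ^+ (i - j) = - (-1) ^+ (i.-1 - j) :> R.
  by rewrite (_ : (i - j = (i.-1 - j).+1)%N); [rewrite exprS mulN1r|lia].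
rewrite mulrBr; apply: addr_ge0; first by apply: IH (hU' i (leqnn i)) ji.
rewrite E mulNr opprK.
rewrite mulrCA; apply: mulr_ge0.
  apply: hU => //; lia.
apply: IH (hU' _ (leq_pred i)) ji'.
Qed.

End Alg2.

Section Alg3.
Variable R : realType.
Implicit Types (A B C : imx R) (I J V : nat -> R -> R) (U W : nat -> nat -> R -> R).

Lemma Pn_strict n U i e : (n <= i)%N ->
  (forall k m, (k < n)%N -> (m < i)%N -> 0 < U k m e) ->
  0 < (-1) ^+ n * Pn n U i (i - n)%N e.
Proof.
elim: n i => [|n IH] i ni hU.
  by rewrite subn0 Pn_diag expr0 mulr1.
rewrite Pn_entry.
have i0 : (0 < i)%N by lia.
have -> : (0 < i)%N && (n <= i.-1)%N by apply/andP; split => //; lia.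
rewrite Pn_band; last by lia.
have -> : (i - n.+1 = i.-1 - n)%N by lia.
rewrite sub0r exprS mulN1r mulNr mulrN opprK mulrCA.
apply: mulr_gt0; first by apply: hU => //; lia.
apply: IH; first by lia.
move=> k m kn mi; apply: hU; lia.
Qed.

Lemma Pn_ext n U W : (forall k, (k < n)%N -> U k = W k) -> Pn n U = Pn n W.
Proof.
elim: n => [|n IH] h //=.
rewrite IH ?h // => k kn; apply: h; exact: ltnW.
Qed.

Lemma big_Pn n W :
  \big[@imul R/@imx1 R]_(i < n) Fkmx (n - i.+1)%N (W (n - i.+1)%N) = Pn n W.
Proof.
elim: n => [|n IH]; first by rewrite big_ord0.
rewrite big_ord_recl /= subn1 /=; congr (imul _ _).
rewrite -IH; apply: eq_bigr => i _.
by rewrite /= subSS.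
Qed.

Lemma Fprod_Pn N (U : 'I_N.+1 -> nat -> R -> R) :
  Fprod U = Pn N.+1 (fun k => U (inord k)).
Proof.
rewrite -big_Pn /Fprod; apply: eq_bigr => i _.
congr (Fkmx _ (U _)); apply: val_inj; rewrite /= inordK //.
rewrite ltnS; exact: leq_subr.
Qed.

Lemma sum_widen' (f : nat -> R) n m : (n <= m)%N ->
  (forall k, (n <= k)%N -> (k < m)%N -> f k = 0) ->
  \sum_(k < n) f k = \sum_(k < m) f k.
Proof. by move=> h1 h2; rewrite (sum_widen h1 h2). Qed.

Lemma imulA_pt A B C i j e :
  (forall k, (i.+1 < k)%N -> A i k e = 0) ->
  (forall k l, (k.+1 < l)%N -> B k l e = 0) ->
  (forall k l, (i.+1 < l)%N -> A i k e * B k l e = 0) ->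
  imul A (imul B C) i j e = imul (imul A B) C i j e.
Proof.
move=> hA hB hAB; rewrite /imul.
transitivity (\sum_(k < i.+3) \sum_(l < i.+3) A i k e * (B k l e * C l j e)).
  transitivity (\sum_(k < i.+2) A i k e * \sum_(l < i.+3) B k l e * C l j e).
    apply: eq_bigr => k _; congr (_ * _).
    apply: (@sum_widen' (fun l => B k l e * C l j e)).
      by have := ltn_ord k; lia.
    by move=> l h1 _; rewrite hB ?mul0r.
  rewrite (@sum_widen' (fun k => A i k e * \sum_(l < i.+3) B k l e * C l j e) i.+2 i.+3) //.
    by apply: eq_bigr => k _; rewrite mulr_sumr.
  move=> k h1 h2; rewrite hA ?mul0r //; lia.
transitivity (\sum_(l < i.+3) \sum_(k < i.+3) A i k e * B k l e * C l j e).
  rewrite exchange_big /=; apply: eq_bigr => l _; apply: eq_bigr => k _.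
  by rewrite mulrA.
transitivity (\sum_(l < i.+2) \sum_(k < i.+3) A i k e * B k l e * C l j e).
  symmetry; apply: (@sum_widen' (fun l => \sum_(k < i.+3) A i k e * B k l e * C l j e)) => //.
  move=> l h1 h2; apply: big1 => k _; rewrite hAB ?mul0r //; lia.
apply: eq_bigr => l _; rewrite -mulr_suml; congr (_ * _).
symmetry; apply: (@sum_widen' (fun k => A i k e * B k l e)) => //.
move=> k h1 h2; rewrite hA ?mul0r //; lia.
Qed.

End Alg3.

Lemma near_all_lt {T : Type} (F : set_system T) {FF : Filter F} (P : nat -> T -> Prop) n :
  (forall k, (k < n)%N -> \forall x \near F, P k x) ->
  \forall x \near F, forall k, (k < n)%N -> P k x.
Proof.
elim: n => [|n IH] h; first by apply: filterE => x k.
have h1 := IH (fun k kn => h k (leqW kn)).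
have h2 := h n (ltnSn n).
apply: filterS2 h1 h2 => x H1 H2 k; rewrite ltnS leq_eqVlt => /orP[/eqP->|/H1] //.
Qed.

Section Alg4.
Variable R : realType.
Implicit Types (A B C : imx R) (I J V : nat -> R -> R) (U W : nat -> nat -> R -> R).

Definition Kfun a J V : nat -> R -> R := fun i e =>
  if (i < a)%N then J i e else if i == a then J a e + V 0%N e
  else (J i e + V (i - a)%N e) * J i.-1 e / (J i.-1 e + V (i.-1 - a)%N e).

Definition Xfun a J V : nat -> R -> R := fun m e =>
  (J (a + m).+1 e + V m.+1 e) * V m e / (J (a + m)%N e + V m e).

Lemma Fkmx_low a V i k e : (i < k)%N -> Fkmx a V i k e = 0.
Proof.
move=> ik; rewrite /Fkmx (ltn_eqF ik).
by have -> : (i == k.+1) = false by apply/negbTE; rewrite neq_ltn (ltn_trans ik).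
Qed.

Lemma local_pt a J V i j e : (forall m, (m <= i)%N -> 0 < J m e /\ 0 < V m e) ->
  imul (Fkmx a (Xfun a J V)) (Emx J) i j e = imul (Emx (Kfun a J V)) (Fkmx a V) i j e.
Proof.
move=> hp.
rewrite imul_LE; last by move=> k; exact: Fkmx_low.
rewrite imul_EL /Fkmx.
have Dne : forall m m', (m <= i)%N -> (m' <= i)%N -> J m e + V m' e != 0.
  move=> m m' hm hm'; have [h1 _] := hp m hm; have [_ h2] := hp m' hm'.
  by rewrite gt_eqF // addr_gt0.
case: (eqVneq j i) => [->|nji].
  rewrite mul1r mulr1 eqxx /= ?(gtn_eqF (ltnSn _)) ?(ltn_eqF (ltnSn _)) /=.
  case: i hp Dne => [|i] hp Dne.
    rewrite /Kfun; case: a => [|a] /=; last by rewrite addr0.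
    by rewrite addr0 subn0 addrK.
  rewrite eqxx /= -[(a <= i)%N]ltnS /Kfun.
  have -> : (i.+1 == i) = false by lia.
  case: (ltngtP i.+1 a) => ha /=.
  - by rewrite addr0.
  - have hai : (a <= i)%N by lia.
    rewrite /Xfun (subnKC hai) (subSn hai) /=.
    have hD := Dne i (i - a)%N (leqnSn i) (leq_trans (leq_subr a i) (leqnSn i)).
    by field.
  - by rewrite -ha subnn addr0 addrK.
case: (eqVneq i j.+1) => [hij|nij].
  subst i; rewrite ?eqxx /=.
  have -> : (match j with 0 => 0 | j'.+1 => if j.+1 == j' then 1 else if (j.+1 == j'.+1) && (a <= j')%N then - Xfun a J V (j' - a) e else 0 end) = 0 :> R.
    case: j {nji hp Dne} => [|j] //=.
    have -> : (j.+2 == j) = false by lia.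
    by have -> : (j.+2 == j.+1) = false by lia.
  have -> : (j.+2 == j) = false by lia.
  have -> : (j.+2 == j.+1) = false by lia.
  rewrite /= !addr0.
  case: (leqP a j) => haj /=; last by rewrite mul0r mulr0.
  rewrite /Kfun /Xfun.
  have -> : (j.+1 < a)%N = false by lia.
  have -> : (j.+1 == a) = false by lia.
  rewrite /= (subnKC haj) (subSn haj).
  have hD := Dne j (j - a)%N (leqnSn j) (leq_trans (leq_subr a j) (leqnSn j)).
  by field.
case: (eqVneq j i.+1) => [->|nj1].
  rewrite eqxx /= ?(gtn_eqF (ltnSn _)) ?(ltn_eqF (ltnSn _)).
  by rewrite /= mul0r mulr0.
rewrite /= mul0r mulr0 add0r eqSS eq_sym (negbTE nji) /=.
rewrite addr0.
case: j nij nj1 nji => [|j] //= nij nj1 nji.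
have -> : (i == j) = false by lia.
by have -> : (i == j.+1) = false by lia.
Qed.

End Alg4.

Section Alg5.
Variable R : realType.
Implicit Types (A B C : imx R) (I J V f g h : nat -> R -> R) (U W : nat -> nat -> R -> R).

Lemma filt0 : Filter ((0:R)^'+).
Proof. by typeclasses eauto. Qed.

Lemma germ_trans (f g h : R -> R) : germ_eq f g -> germ_eq g h -> germ_eq f h.
Proof. by move=> h1 h2; apply: filterS2 h1 h2 => e -> . Qed.

Lemma germ_sym (f g : R -> R) : germ_eq f g -> germ_eq g f.
Proof. by move=> h1; apply: filterS h1 => e -> . Qed.

Lemma germ_refl (f : R -> R) : germ_eq f f.
Proof. exact: filterE. Qed.

Lemma meq_trans A B C : imx_germ_eq A B -> imx_germ_eq B C -> imx_germ_eq A C.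
Proof. by move=> h1 h2 i j; apply: germ_trans (h1 i j) (h2 i j). Qed.

Lemma imul_germ_r A B B' : imx_germ_eq B B' -> imx_germ_eq (imul A B) (imul A B').
Proof.
move=> h i j.
have := @near_all_lt _ (0:R)^'+ filt0 (fun k e => B k j e = B' k j e) i.+2 (fun k _ => h k j).
by move=> hh; apply: (@filterS _ _ filt0 _ _ _ hh) => e H; rewrite /imul; apply: eq_bigr => k _; rewrite H.
Qed.

Lemma imul_germ_l A A' B : imx_germ_eq A A' -> imx_germ_eq (imul A B) (imul A' B).
Proof.
move=> h i j.
have := @near_all_lt _ (0:R)^'+ filt0 (fun k e => A i k e = A' i k e) i.+2 (fun k _ => h i k).
by move=> hh; apply: (@filterS _ _ filt0 _ _ _ hh) => e H; rewrite /imul; apply: eq_bigr => k _; rewrite H.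
Qed.

Lemma local_germ a J V : (forall m, inM (J m)) -> (forall m, inM (V m)) ->
  imx_germ_eq (imul (Fkmx a (Xfun a J V)) (Emx J)) (imul (Emx (Kfun a J V)) (Fkmx a V)).
Proof.
move=> hJ hV i j.
have := @near_all_lt _ (0:R)^'+ filt0 (fun m e => 0 < J m e /\ 0 < V m e) i.+1
  (fun m _ => @filterS2 _ _ filt0 _ _ _ (fun e a b => conj a b) (inM_pos (hJ m)) (inM_pos (hV m))).
by move=> hh; apply: (@filterS _ _ filt0 _ _ _ hh) => e H; apply: local_pt => m hm; apply: H.
Qed.

Lemma inM_Kfun a J V : (forall m, inM (J m)) -> (forall m, inM (V m)) ->
  forall i, inM (Kfun a J V i).
Proof.
move=> hJ hV i; rewrite /Kfun.
case: (i < a)%N; first exact: hJ.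
case: (i == a); first exact: inMD.
apply: inMM; first by apply: inMM => //; apply: inMD.
by apply: inMV; apply: inMD.
Qed.

Lemma inM_Xfun a J V : (forall m, inM (J m)) -> (forall m, inM (V m)) ->
  forall m, inM (Xfun a J V m).
Proof.
move=> hJ hV m; rewrite /Xfun.
apply: inMM; first by apply: inMM => //; apply: inMD.
by apply: inMV; apply: inMD.
Qed.

Fixpoint Jc U I k : nat -> R -> R :=
  if k is k'.+1 then Kfun k' (Jc U I k') (U k') else I.

Definition Uc U I k := Xfun k (Jc U I k) (U k).

Lemma inM_Jc U I : (forall k m, inM (U k m)) -> (forall m, inM (I m)) ->
  forall k m, inM (Jc U I k m).
Proof.
move=> hU hI; elim=> [|k IH] //=.
exact: inM_Kfun.
Qed.

Lemma assoc1 A B C : (forall i k e, (i < k)%N -> A i k e = 0) ->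
  (forall k l e, (k < l)%N -> B k l e = 0) ->
  imul A (imul B C) = imul (imul A B) C.
Proof.
move=> hA hB; apply: funext => i; apply: funext => j; apply: funext => e.
apply: imulA_pt.
- move=> k ik; apply: hA; lia.
- move=> k l kl; apply: hB; lia.
- move=> k l il; case: (ltnP i k) => ik; first by rewrite hA ?mul0r.
  rewrite hB ?mulr0 //; lia.
Qed.

Lemma assoc2 A K C : (forall i k e, (i < k)%N -> A i k e = 0) ->
  imul A (imul (Emx K) C) = imul (imul A (Emx K)) C.
Proof.
move=> hA; apply: funext => i; apply: funext => j; apply: funext => e.
have hE : forall k l, (k.+1 < l)%N -> Emx K k l e = 0.
  move=> k l kl; rewrite /Emx.
  have -> : (l == k) = false by lia.
  by have -> : (l == k.+1) = false by lia.
apply: imulA_pt => //.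
- move=> k ik; apply: hA; lia.
- move=> k l il; case: (ltnP i k) => ik; first by rewrite hA ?mul0r.
  rewrite hE ?mulr0 //; lia.
Qed.

Lemma assoc3 K B C : (forall k l e, (k < l)%N -> B k l e = 0) ->
  imul (Emx K) (imul B C) = imul (imul (Emx K) B) C.
Proof.
move=> hB; apply: funext => i; apply: funext => j; apply: funext => e.
have hE : forall k l, (k.+1 < l)%N -> Emx K k l e = 0.
  move=> k l kl; rewrite /Emx.
  have -> : (l == k) = false by lia.
  by have -> : (l == k.+1) = false by lia.
apply: imulA_pt.
- by move=> k ik; apply: hE.
- move=> k l kl; apply: hB; lia.
- move=> k l il; case: (ltnP i.+1 k) => ik; first by rewrite hE ?mul0r.
  rewrite hB ?mulr0 //; lia.
Qed.

Lemma base_eq I i j e : imul (@imx1 R) (Emx I) i j e = imul (Emx I) (@imx1 R) i j e.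
Proof.
rewrite imul_LE; last by move=> k ik; rewrite /imx1 (ltn_eqF ik).
rewrite imul_EL /imx1.
case: (eqVneq i j) => [->|nij].
  rewrite mulr1 mul1r.
  have -> : (j.+1 == j) = false by lia.
  case: j => [|j]; first by rewrite !addr0.
  by have -> : (j.+1 == j) = false by lia.
rewrite mul0r mulr0 !add0r.
by case: j nij => [|j] nij //=.
Qed.

Lemma exist_chain U I n : (forall k m, inM (U k m)) -> (forall m, inM (I m)) ->
  imx_germ_eq (imul (Pn n (Uc U I)) (Emx I)) (imul (Emx (Jc U I n)) (Pn n U)).
Proof.
move=> hU hI; elim: n => [|n IH].
  by move=> i j /=; apply: filterE => e; apply: base_eq.
rewrite /= -assoc1; last 2 first.
all: try by move=> ? ? ? ?; first [apply: Fkmx_low | apply: Pn_low].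
rewrite assoc3; last by move=> k l e kl; apply: Fkmx_low.
apply: meq_trans (imul_germ_r _ IH) _.
rewrite assoc2; last by move=> i k e ik; apply: Fkmx_low.
apply: imul_germ_l.
apply: local_germ => //.
exact: inM_Jc.
Qed.

End Alg5.

Section Alg6.
Variable R : realType.
Implicit Types (A B C : imx R) (I J V : nat -> R -> R) (U W X Y : nat -> nat -> R -> R).

Lemma row_uniq (i : nat) (x y p q Iv : nat -> R) (a b : R) :
  (forall j, (j <= i)%N -> x j * Iv j + (if j is j'.+1 then x j' else 0) = a * p j + q j) ->
  (forall j, (j <= i)%N -> y j * Iv j + (if j is j'.+1 then y j' else 0) = b * p j + q j) ->
  x i = 1 -> y i = 1 -> p i = 1 ->
  (forall j, (j <= i)%N -> 0 <= (-1) ^+ (i - j) * p j) ->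
  (forall j, (j <= i)%N -> 0 < Iv j) ->
  a = b /\ (forall j, (j <= i)%N -> x j = y j).
Proof.
move=> hx hy xi yi pi hp hI.
pose d := a - b.
have hd : forall j, (j <= i)%N ->
    (x j - y j) * Iv j + (if j is j'.+1 then x j' - y j' else 0) = d * p j.
  move=> j ji; have h1 := hx j ji; have h2 := hy j ji.
  case: j ji h1 h2 => [|j] ji /= h1 h2.
    transitivity ((x 0%N * Iv 0%N + 0) - (y 0%N * Iv 0%N + 0)); first by ring.
    by rewrite h1 h2 /d; ring.
  transitivity ((x j.+1 * Iv j.+1 + x j) - (y j.+1 * Iv j.+1 + y j)); first by ring.
  by rewrite h1 h2 /d; ring.
have key : forall j, (j < i)%N -> exists c, x j - y j = d * c /\ 0 <= (-1) ^+ (i - j) * c.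
  elim=> [|j IH] ji.
    have h := hd 0%N (ltnW ji); rewrite /= addr0 in h.
    have I0 := hI 0%N (ltnW ji).
    exists (p 0%N / Iv 0%N); split.
      by rewrite mulrA -h mulfK // gt_eqF.
    rewrite mulrA; apply: divr_ge0; [exact: hp|exact: ltW].
  have [c [hc sc]] := IH (ltnW ji).
  have h := hd j.+1 (ltnW ji); rewrite /= hc in h.
  have I1 := hI j.+1 (ltnW ji).
  exists ((p j.+1 - c) / Iv j.+1); split.
    have hI0 : Iv j.+1 != 0 by rewrite gt_eqF.
    apply: (@mulIf _ (Iv j.+1)) => //.
    have -> : (x j.+1 - y j.+1) * Iv j.+1 = d * p j.+1 - d * c by rewrite -h; ring.
    by field.
  rewrite mulrA; apply: divr_ge0; last exact: ltW.
  rewrite mulrBr.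
  have E : (-1) ^+ (i - j) = - (-1) ^+ (i - j.+1) :> R.
    by rewrite (_ : (i - j = (i - j.+1).+1)%N); [rewrite exprS mulN1r|lia].
  rewrite E mulNr in sc.
  by apply: addr_ge0 => //; apply: hp; apply: ltnW.
have hd0 : d = 0.
  have h := hd i (leqnn i); rewrite xi yi subrr mul0r add0r pi mulr1 in h.
  have [i0|ipos] := posnP i.
    by move: h; rewrite i0.
  move: h; rewrite -(prednK ipos) => h.
  have ki : (i.-1 < i)%N by rewrite ltn_predL.
  have [c [hc sc]] := key _ ki.
  rewrite (_ : (i - i.-1 = 1)%N) ?expr1 ?mulN1r ?oppr_ge0 in sc; last by lia.
  have : d * (1 - c) = 0 by rewrite mulrBr mulr1 -hc h subrr.
  move/eqP; rewrite mulf_eq0 => /orP[/eqP//|].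
  by rewrite subr_eq0 => /eqP c1; move: sc; rewrite -c1 ler10.
split; first by apply/eqP; rewrite -subr_eq0 -/d hd0.
move=> j; rewrite leq_eqVlt => /orP[/eqP->|ji]; first by rewrite xi yi.
have [c [hc _]] := key j ji.
by apply/eqP; rewrite -subr_eq0 hc hd0 mul0r.
Qed.

Lemma uniq_row n W I X Y (IX IY : nat -> R -> R) :
  (forall k m, inM (W k m)) -> (forall m, inM (I m)) ->
  imx_germ_eq (imul (Pn n X) (Emx I)) (imul (Emx IX) (Pn n W)) ->
  imx_germ_eq (imul (Pn n Y) (Emx I)) (imul (Emx IY) (Pn n W)) ->
  forall i, \forall e \near 0^'+, IX i e = IY i e /\ forall j, Pn n X i j e = Pn n Y i j e.
Proof.
move=> hW hI hX hY i.
have h1 := @near_all_lt _ _ (filt0 R) (fun j e =>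
   imul (Pn n X) (Emx I) i j e = imul (Emx IX) (Pn n W) i j e /\
   imul (Pn n Y) (Emx I) i j e = imul (Emx IY) (Pn n W) i j e /\ 0 < I j e) i.+1
   (fun j _ => @filterS2 _ _ (filt0 R) _ _ _ (fun e a b => conj a b) (hX i j)
       (@filterS2 _ _ (filt0 R) _ _ _ (fun e a b => conj a b) (hY i j) (inM_pos (hI j)))).
have h2 := @near_all_lt _ _ (filt0 R) (fun k e => forall m, (m < i)%N -> 0 < W k m e) n
   (fun k _ => @near_all_lt _ _ (filt0 R) (fun m e => 0 < W k m e) i (fun m _ => inM_pos (hW k m))).
apply: (@filterS2 _ _ (filt0 R) _ _ _ _ h1 h2) => e H1 H2.
have hx : forall j, (j <= i)%N -> Pn n X i j e * I j e +
    (if j is j'.+1 then Pn n X i j' e else 0) = IX i e * Pn n W i j e + Pn n W i.+1 j e.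
  move=> j ji; have [E _] := H1 j ji.
  by rewrite imul_LE ?imul_EL in E => // k ik; apply: Pn_low.
have hy : forall j, (j <= i)%N -> Pn n Y i j e * I j e +
    (if j is j'.+1 then Pn n Y i j' e else 0) = IY i e * Pn n W i j e + Pn n W i.+1 j e.
  move=> j ji; have [_ [E _]] := H1 j ji.
  by rewrite imul_LE ?imul_EL in E => // k ik; apply: Pn_low.
have [ab hxy] := row_uniq hx hy (Pn_diag _ _ _ _) (Pn_diag _ _ _ _) (Pn_diag _ _ _ _)
  (fun j ji => Pn_sign (fun k m kn mi => ltW (H2 k kn m mi)) ji)
  (fun j ji => (H1 j ji).2.2).
split => // j.
case: (leqP j i) => ji; first exact: hxy.
by rewrite !Pn_low.
Qed.

Lemma Pn_inj n X Y e (Bd : nat) :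
  (forall k m, (k < n)%N -> (m < Bd)%N -> 0 < X k m e /\ 0 < Y k m e) ->
  (forall i j, (i <= Bd)%N -> Pn n X i j e = Pn n Y i j e) ->
  forall k m, (k < n)%N -> (k + m < Bd)%N -> X k m e = Y k m e.
Proof.
elim: n => [|n IH] hpos heq k m //.
have rows : forall i, (i <= Bd)%N -> (forall j, Pn n X i j e = Pn n Y i j e) /\
    ((n < i)%N -> X n (i.-1 - n)%N e = Y n (i.-1 - n)%N e).
  elim=> [|i IHi] iB.
    split => // j; have := heq 0%N j iB; by rewrite !Pn_entry /= !subr0.
  have [IHr _] := IHi (ltnW iB).
  have vi : (n <= i)%N -> X n (i - n)%N e = Y n (i - n)%N e.
    move=> ni; have := heq i.+1 (i - n)%N iB; rewrite !Pn_entry /= ni /=.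
    have hb : (i - n + n < i.+1)%N by lia.
    rewrite (@Pn_band _ n X i.+1 (i - n)%N e hb) (@Pn_band _ n Y i.+1 (i - n)%N e hb).
    rewrite IHr !sub0r => /eqP; rewrite eqr_opp => /eqP.
    apply: mulIf.
    have hmB : forall m, (m < i)%N -> (m < Bd)%N by move=> m' mi; lia.
    have := Pn_strict (U := Y) (e := e) ni (fun k m kn mi => (hpos k m (ltnW kn) (hmB m mi)).2).
    by move/gt_eqF/negbT; rewrite mulf_eq0 negb_or => /andP[_].
  split.
    move=> j; have := heq i.+1 j iB; rewrite !Pn_entry /= IHr.
    case: (leqP n i) => ni /=; last by rewrite !subr0.
    by rewrite (vi ni) => /addIr.
  by move=> ni; apply: vi; lia.
move=> kn km.
case: (ltnP k n) => kn'.
  apply: IH => //.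
  - by move=> k' m' k'n m'B; apply: hpos => //; apply: ltnW.
  - by move=> i j iB; have [] := rows i iB.
have -> : k = n by lia.
have nmB : ((n + m).+1 <= Bd)%N by lia.
have [_ h] := rows (n + m).+1 nmB.
by move: h; rewrite /= addKn; apply; lia.
Qed.

End Alg6.
Unset Implicit Arguments.

Definition Kexp {Vt : Type} (a : nat) (jE vE : nat -> sfexpr Vt) (i : nat) : sfexpr Vt :=
  if (i < a)%N then jE i else if i == a then SAdd (jE a) (vE 0%N)
  else SMul (SMul (SAdd (jE i) (vE (i - a)%N)) (jE i.-1))
            (SInv (SAdd (jE i.-1) (vE (i.-1 - a)%N))).

Definition Xexp {Vt : Type} (a : nat) (jE vE : nat -> sfexpr Vt) (m : nat) : sfexpr Vt :=
  SMul (SMul (SAdd (jE (a + m).+1) (vE m.+1)) (vE m))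
       (SInv (SAdd (jE (a + m)%N) (vE m))).

Definition uvar (N k m : nat) : sfexpr (pvar N) := SVar (inl (inord k, m)).

Fixpoint JcE (N k : nat) : nat -> sfexpr (pvar N) :=
  if k is k'.+1 then Kexp k' (JcE N k') (uvar N k') else (fun i => SVar (inr i)).

Definition UcE (N k : nat) : nat -> sfexpr (pvar N) := Xexp k (JcE N k) (uvar N k).

Section Final.
Variable R : realType.

Lemma eval_Kexp (Vt : Type) (env : Vt -> R -> R) a jE vE i :
  sfeval env (Kexp a jE vE i) =
  Kfun a (fun m => sfeval env (jE m)) (fun m => sfeval env (vE m)) i.
Proof. by rewrite /Kexp /Kfun; case: (i < a)%N => //; case: (i == a). Qed.

Lemma eval_Xexp (Vt : Type) (env : Vt -> R -> R) a jE vE m :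
  sfeval env (Xexp a jE vE m) =
  Xfun a (fun m => sfeval env (jE m)) (fun m => sfeval env (vE m)) m.
Proof. by []. Qed.

Lemma eval_JcE N (U : 'I_N.+1 -> nat -> R -> R) (I : nat -> R -> R) k :
  (fun i => sfeval (penv U I) (JcE N k i)) = Jc (fun k => U (inord k)) I k.
Proof.
elim: k => [|k IH] //=.
apply: funext => i; rewrite eval_Kexp IH //.
Qed.

Lemma eval_UcE N (U : 'I_N.+1 -> nat -> R -> R) (I : nat -> R -> R) k m :
  sfeval (penv U I) (UcE N k m) = Uc (fun k => U (inord k)) I k m.
Proof. by rewrite /UcE eval_Xexp eval_JcE. Qed.

End Final.

Theorem proposition3p6 (R : realType) (N : nat) :
  exists (eU : 'I_N.+1 -> nat -> sfexpr (pvar N)) (eI : nat -> sfexpr (pvar N)),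
  forall (U : 'I_N.+1 -> nat -> R -> R) (I : nat -> R -> R),
    (forall a k, inM (U a k)) -> (forall k, inM (I k)) ->
    let U' := fun a k => sfeval (penv U I) (eU a k) in
    let I' := fun k => sfeval (penv U I) (eI k) in
    is_solution U I U' I' /\
    (forall (U'' : 'I_N.+1 -> nat -> R -> R) (I'' : nat -> R -> R),
       is_solution U I U'' I'' ->
       (forall a k, germ_eq (U'' a k) (U' a k)) /\
       (forall k, germ_eq (I'' k) (I' k))).
Proof.
exists (fun a k => UcE N a k), (fun k => JcE N N.+1 k).
move=> U I hU hI U' I'.
pose W := fun k => U (inord k).
have hW : forall k m, inM (W k m) by move=> k m; apply: hU.
have henv : forall v, inM (penv U I v) by case=> [[a k]|k] /=; [apply: hU|apply: hI].
have U'E : forall a k, U' a k = Uc W I a k by move=> a k; rewrite /U' eval_UcE.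
have I'E : I' = Jc W I N.+1 by rewrite /I' eval_JcE.
have hUc : forall k m, inM (Uc W I k m).
  by move=> k m; apply: inM_Xfun => //; apply: inM_Jc.
have PU' : Fprod U' = Pn N.+1 (Uc W I).
  rewrite Fprod_Pn; apply: Pn_ext => k kn.
  apply: funext => m; rewrite U'E inordK //.
have PU : Fprod U = Pn N.+1 W by rewrite Fprod_Pn.
split.
  split.
  - by move=> a k; rewrite /U'; apply: inM_sfeval.
  - by move=> k; rewrite /I'; apply: inM_sfeval.
  - by rewrite PU' PU I'E; apply: exist_chain.
move=> U'' I'' [hU'' hI'' heq].
pose X := fun k => U'' (inord k).
have hX : imx_germ_eq (imul (Pn N.+1 X) (Emx I)) (imul (Emx I'') (Pn N.+1 W)).
  by rewrite -PU -Fprod_Pn.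
have hY : imx_germ_eq (imul (Pn N.+1 (Uc W I)) (Emx I)) (imul (Emx I') (Pn N.+1 W)).
  by rewrite I'E; apply: exist_chain.
have rowu := uniq_row hW hI hX hY.
split; last first.
  move=> k; apply: (@filterS _ _ (filt0 R) _ _ _ (rowu k)) => e [-> _] //.
move=> a k.
pose Bd := (a + k).+1.
have h1 := @near_all_lt _ _ (filt0 R) (fun i e => forall j, Pn N.+1 X i j e = Pn N.+1 (Uc W I) i j e) Bd.+1
   (fun i _ => @filterS _ _ (filt0 R) _ _ (fun e (H : _ /\ _) => H.2) (rowu i)).
have h2 := @near_all_lt _ _ (filt0 R) (fun kk e => forall m, (m < Bd)%N -> 0 < X kk m e /\ 0 < Uc W I kk m e) N.+1
   (fun kk _ => @near_all_lt _ _ (filt0 R) (fun m e => 0 < X kk m e /\ 0 < Uc W I kk m e) Bd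
     (fun m _ => @filterS2 _ _ (filt0 R) _ _ _ (fun e a b => conj a b)
        (inM_pos (hU'' (inord kk) m)) (inM_pos (hUc kk m)))).
apply: (@filterS2 _ _ (filt0 R) _ _ _ _ h1 h2) => e H1 H2.
have := @Pn_inj R N.+1 X (Uc W I) e Bd (fun kk m kn mB => H2 kk kn m mB)
  (fun i j iB => H1 i iB j) a k (ltn_ord a) (leqnn _).
by rewrite /X inord_val U'E.
Qed.
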